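(* With $\mathcal N=\mathbb N^*$, $\Omega=\{x,y\}$, $U$ and the operation $\odot$ as in the context, one has $$S_{\mathcal N}\odot U=S_\Omega,\qquad T_{\mathcal N}\odot U=T_\Omega.$$
   Context: Words and moulds: $\underline{\mathcal N}$, $\underline\Omega$ are the sets of finite words over $\mathcal N$, $\Omega$ (empty word $\emptyset$, length $r(\cdot)$); moulds are functions to $\mathbb Q$ with product $(M\times N)^{\underline n}=\sum_{\underline n=\underline a\underline b}M^{\underline a}N^{\underline b}$, unit $\mathbb 1$, $e^M=\sum_kM^{\times k}/k!$ ($M^\emptyset=0$), $\log M=\sum_{k\ge1}\frac{(-1)^{k-1}}k(M-\mathbb 1)^{\times k}$ ($M^\emptyset=1$). $S_{\mathcal N}^\emptyset=1$, $S_{\mathcal N}^{n_1\cdots n_r}=1/(n_r(n_r+n_{r-1})\cdots(n_r+\cdots+n_1))$, $T_{\mathcal N}=\log S_{\mathcal N}$. $I_x$ (resp. $I_y$) is $1$ on the one-letter word $x$ (resp. $y$) and $0$ elsewhere; $S_\Omega=e^{I_x}\times e^{I_y}$, i.e. $S_\Omega^{x^py^q}=\frac1{p!q!}$ and $S_\Omega$ vanishes on words not of the form $x^py^q$; $T_\Omega=\log S_\Omega$. $U\in\mathbb Q^{\underline\Omega}$: $U^x=1$, $U^{x^pyx^q}=\frac{(-1)^q}{p!q!}$ ($p,q\in\mathbb N$), $0$ otherwise. For $M\in\mathbb Q^{\underline{\mathcal N}}$, $(M\odot U)^\emptyset=M^\emptyset$ and for nonempty $\underline\omega$, $(M\odot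 U)^{\underline\omega}=\sum_{s\ge1}\sum_{\underline\omega=\underline\omega^1\cdots\underline\omega^s,\ \underline\omega^i\ne\emptyset}M^{r(\underline\omega^1)\cdots r(\underline\omega^s)}U^{\underline\omega^1}\cdots U^{\underline\omega^s}$. *)

(* Defs.v *)
From HB Require Import structures.
From mathcomp Require Import all_boot all_order all_algebra.
Set Implicit Arguments. Unset Strict Implicit. Unset Printing Implicit Defensive.
Import Order.TTheory GRing.Theory Num.Theory.
Local Open Scope ring_scope.

Definition mould (A : Type) := seq A -> rat.

Definition onem {A : Type} : mould A := fun w => if w is [::] then 1 else 0.

Definition mulm {A : Type} (M N : mould A) : mould A :=
  fun w => \sum_(i < (size w).+1) M (take i w) * N (drop i w).

Definition powm {A : Type} (M : mould A) (k : nat) : mould A := iter k (mulm M) onem.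

(* e^M = sum_k M^{xk}/k!  (for M^emptyset = 0, only k <= length w contribute) *)
Definition expm {A : Type} (M : mould A) : mould A :=
  fun w => \sum_(k < (size w).+1) powm M k w / (k`!)%:R.

(* log M = sum_{k>=1} (-1)^{k-1}/k (M - 1)^{xk}  (for M^emptyset = 1, only
   k <= length w contribute) *)
Definition logm {A : Type} (M : mould A) : mould A :=
  fun w => \sum_(1 <= k < (size w).+1)
             (-1) ^+ k.-1 / k%:R * powm (fun v => M v - onem v) k w.

(* ---------- alphabet N = N^* (words: seq nat with positive letters) ---------- *)
Definition S_N : mould nat :=
  fun w => \prod_(k < size w) ((\sum_(i <- drop k w) i)%:R)^-1.

Definition T_N : mould nat := logm S_N.

Inductive Omega := lx | ly.
Definition is_y (a : Omega) : bool := if a is ly then true else false.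

Definition I_x : mould Omega := fun w => if w is [:: lx] then 1 else 0.
Definition I_y : mould Omega := fun w => if w is [:: ly] then 1 else 0.

Definition S_Om : mould Omega := mulm (expm I_x) (expm I_y).
Definition T_Om : mould Omega := logm S_Om.

(* U^x = 1, U^{x^p y x^q} = (-1)^q/(p! q!), 0 otherwise *)
Definition U : mould Omega :=
  fun w =>
    if w is [:: lx] then 1
    else if (count is_y w == 1)%N then
      let p := find is_y w in
      let q := (size w - p - 1)%N in
      (-1) ^+ q / ((p`!)%:R * (q`!)%:R)
    else 0.

(* all factorisations w = w^1 ... w^s into nonempty factors (s >= 1 if w <> []);
   fuel = size w suffices *)
Fixpoint facts_aux {A : Type} (fuel : nat) (w : seq A) : seq (seq (seq A)) :=
  match fuel with
  | 0 => [:: [::]]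
  | fuel'.+1 =>
      if w is [::] then [:: [::]]
      else flatten [seq [seq take i w :: f | f <- facts_aux fuel' (drop i w)]
                   | i <- iota 1 (size w)]
  end.
Definition factorizations {A : Type} (w : seq A) := facts_aux (size w) w.

Definition odotU (M : mould nat) : mould Omega :=
  fun w => if w is [::] then M [::]
           else \sum_(f <- factorizations w) M (map size f) * \prod_(p <- f) U p.

(* Main.v *)
From HB Require Import structures.
Require Import Defs.
From mathcomp Require Import all_boot all_order all_algebra zify ring.
Set Implicit Arguments. Unset Strict Implicit. Unset Printing Implicit Defensive.
Import Order.TTheory GRing.Theory Num.Theory.
Local Open Scope ring_scope.

Definition b2o (b : bool) : Omega := if b then ly else lx.
Lemma is_yK : cancel is_y b2o. Proof. by case. Qed.
HB.instance Definition _ := Equality.copy Omega (can_type is_yK).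

Definition G (M : mould nat) (w : seq Omega) : rat :=
  \sum_(f <- factorizations w) M (map size f) * \prod_(p <- f) U p.

Lemma G_nil M : G M [::] = M [::].
Proof. by rewrite /G /factorizations /= big_seq1 /= big_nil mulr1. Qed.

Lemma odotU_G M w : odotU M w = G M w.
Proof. by case: w => [|a w]; rewrite ?G_nil. Qed.

Lemma facts_fuel : forall n1 n2 (w : seq Omega), (size w <= n1)%N -> (size w <= n2)%N ->
  facts_aux n1 w = facts_aux n2 w.
Proof.
elim=> [|n1 IH] [|n2] w h1 h2.
- by [].
- by case: w h1 h2.
- by case: w h1 h2.
- case: w h1 h2 => [|a w] // h1 h2; cbn [facts_aux].
  congr flatten; apply/eq_in_map => i; rewrite mem_iota => /andP[hi1 hi2]; rewrite /= in hi2 *.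
  rewrite (IH n2) // size_drop /=. all: rewrite /= in h1 h2 hi2; lia.
Qed.

Lemma G_rec M (w : seq Omega) : w != [::] ->
  G M w = \sum_(1 <= i < (size w).+1) U (take i w) * G (fun n => M (i :: n)) (drop i w).
Proof.
case: w => [|a w] // _.
rewrite /G {1}/factorizations; change (size (a :: w)) with (size w).+1; cbn [facts_aux]. rewrite big_flatten big_map /index_iota subn1.
rewrite big_seq [RHS]big_seq; apply: eq_bigr => i; rewrite mem_iota => /andP[hi1 hi2]; rewrite /= in hi2 *.
rewrite big_map mulr_sumr /factorizations (@facts_fuel (size w) (size (drop i (a :: w)))); last 2 first.
- rewrite size_drop /=; lia.
- by [].
apply: eq_bigr => f _ /=; rewrite big_cons size_takel; last by rewrite /=; lia.
by rewrite mulrCA.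
Qed.

Lemma G_eq M M' w : (forall n, M n = M' n) -> G M w = G M' w.
Proof. by move=> h; apply: eq_bigr => f _; rewrite h. Qed.

Lemma G_lin c M N w : G (fun n => c * M n + N n) w = c * G M w + G N w.
Proof.
rewrite /G mulr_sumr -big_split; apply: eq_bigr => f _ /=.
by rewrite mulrDl mulrA.
Qed.

Lemma G_const0 w : G (fun _ => 0) w = 0.
Proof. by rewrite /G big1 // => f _; rewrite mul0r. Qed.

Lemma mulm_cons (M N : mould nat) i n :
  mulm M N (i :: n) = M [::] * N (i :: n) + mulm (fun v => M (i :: v)) N n.
Proof. by rewrite /mulm /= big_ord_recl /=. Qed.

Lemma G_mulm k : forall M N (w : seq Omega), (size w < k)%N ->
  G (mulm M N) w = mulm (G M) (G N) w.
Proof.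
elim: k => [|k IH] M N w // hw.
case: w hw => [|a w'] hw.
  by rewrite G_nil /mulm /= !big_ord1 /= !G_nil.
set w := a :: w'.
have wn : w != [::] by [].
set n := size w.
pose H i k0 := G (fun v => M (i :: v)) (drop i (take k0 w)) * G N (drop k0 w).
transitivity (\sum_(1 <= i < n.+1) U (take i w) *
   (M [::] * G (fun v => N (i :: v)) (drop i w) + \sum_(i <= k0 < n.+1) H i k0)).
  rewrite G_rec //; apply: eq_big_nat => i /andP[hi1 hi2]; congr (_ * _).
  rewrite (G_eq _ (fun v => mulm_cons M N i v)) G_lin IH; last first.
    rewrite size_drop; move: hw; rewrite /= -/n; lia.
  congr (_ + _); rewrite /mulm size_drop -/n. rewrite [RHS](big_addn 0 _ i) big_mkord.
  have -> : (n.+1 - i = (n - i).+1)%N by lia.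
  apply: eq_bigr => k0 _; rewrite /H take_drop drop_drop //.
rewrite /mulm -(big_mkord xpredT (fun k0 => G M (take k0 w) * G N (drop k0 w))) big_ltn // /= G_nil.
rewrite (eq_bigr (fun i => M [::] * (U (take i w) * G (fun v => N (i :: v)) (drop i w))
     + U (take i w) * \sum_(i <= k0 < n.+1) H i k0)); last first.
  by move=> i _; rewrite mulrDr mulrCA.
rewrite big_split /= -mulr_sumr -G_rec //; congr (_ + _).
transitivity (\sum_(1 <= i < n.+1) \sum_(1 <= k0 < n.+1)
     (if (i <= k0)%N then U (take i w) * H i k0 else 0)).
  apply: eq_big_nat => i /andP[hi1 hi2].
  rewrite mulr_sumr (big_nat_widenl _ 1) // big_mkcond /=.
  by apply: eq_bigr => k0 _; case: ifP.
rewrite exchange_big_nat; apply: eq_big_nat => k0 /andP[hk1 hk2].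
rewrite (G_rec _ (w := take k0 w)); last first.
  by rewrite -size_eq0 size_takel ?lt0n_neq0 // -ltnS.
rewrite size_takel; last by rewrite -ltnS.
rewrite mulr_suml [RHS](big_nat_widen _ _ n.+1) // [RHS]big_mkcond.
apply: eq_big_nat => i /andP[hi1 hi2] /=.
rewrite ltnS; case: ifP => // hik.
by rewrite take_takel // /H mulrA.
Qed.

Lemma G_ext k : forall M M' (w : seq Omega), (size w < k)%N ->
  (forall n, (size n <= size w)%N -> M n = M' n) -> G M w = G M' w.
Proof.
elim: k => [|k IH] M M' w // hw h.
case: w hw h => [|a w'] hw h.
  by rewrite !G_nil h.
rewrite !G_rec //; apply: eq_big_nat => i /andP[hi1 hi2]; congr (_ * _).
apply: IH; first by rewrite size_drop; move: hw hi2 => /=; lia.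
move=> v hv; apply: h; move: hv hi1 hi2; rewrite size_drop /=; lia.
Qed.

Lemma G_onem w : G onem w = onem w.
Proof.
case: w => [|a w]; first by rewrite G_nil.
rewrite G_rec // big1 // => i _.
by rewrite (G_eq _ (M' := fun _ => 0)) // G_const0 mulr0.
Qed.

Lemma G_sumk (I : Type) (r : seq I) (P : pred I) (F : I -> mould nat) w :
  G (fun n => \sum_(k <- r | P k) F k n) w = \sum_(k <- r | P k) G (F k) w.
Proof.
rewrite /G (eq_bigr (fun f => \sum_(k <- r | P k) F k (map size f) * \prod_(p <- f) U p)).
  by rewrite exchange_big.
by move=> f _; rewrite mulr_suml.
Qed.

Lemma G_scale c M w : G (fun n => c * M n) w = c * G M w.
Proof. by rewrite -[RHS]addr0 -(G_const0 w) -G_lin; apply: G_eq => n; rewrite addr0. Qed.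

Lemma G_sub M N w : G (fun n => M n - N n) w = G M w - G N w.
Proof.
rewrite -mulN1r -G_scale -[G M w]mul1r -G_lin.
by apply: G_eq => n; rewrite mul1r mulN1r.
Qed.

Lemma mulm_ext {A : Type} (M M' N N' : mould A) w :
  (forall v, M v = M' v) -> (forall v, N v = N' v) -> mulm M N w = mulm M' N' w.
Proof. by move=> h1 h2; apply: eq_bigr => i _; rewrite h1 h2. Qed.

Lemma powm_ext {A : Type} (M M' : mould A) k w :
  (forall v, M v = M' v) -> powm M k w = powm M' k w.
Proof.
move=> h; elim: k w => [|k IH] w //=.
exact: mulm_ext.
Qed.

Lemma G_powm M k w : G (powm M k) w = powm (G M) k w.
Proof.
elim: k w => [|k IH] w; first exact: G_onem.
rewrite [powm M k.+1]/powm /= (@G_mulm (size w).+1) //.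
by apply: mulm_ext.
Qed.

Lemma powm_trunc {A : Type} (N : mould A) : N [::] = 0 ->
  forall k w, (size w < k)%N -> powm N k w = 0.
Proof.
move=> h0; elim=> [|k IH] w // hw.
rewrite /powm /= -/(powm N k) /mulm big_ord_recl /=. rewrite take0 h0 mul0r add0r.
rewrite big1 // => i _; rewrite IH ?mulr0 //.
rewrite size_drop /bump /=. have := ltn_ord i; lia.
Qed.

Lemma logm_trunc {A : Type} (M : mould A) K w : M [::] = 1 -> (size w < K)%N ->
  logm M w = \sum_(1 <= k < K) (-1) ^+ k.-1 / k%:R * powm (fun v => M v - onem v) k w.
Proof.
move=> hM1 hK; rewrite /logm.
set F := (fun k => (-1) ^+ k.-1 / k%:R * powm (fun v => M v - onem v) k w).
transitivity (\sum_(1 <= k < (size w).+1) F k + \sum_((size w).+1 <= k < K) F k); last first.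
  by rewrite -big_cat_nat.
rewrite [X in _ + X]big1_seq ?addr0 // => k; rewrite mem_index_iota => /andP[h1 h2].
rewrite /F powm_trunc ?mulr0 //.
all: try lia.
by rewrite /= hM1 subrr.
Qed.

Lemma G_nabla k : forall M (w : seq Omega), (size w < k)%N ->
  G (fun n => M n * (sumn n)%:R) w = (size w)%:R * G M w.
Proof.
elim: k => [|k IH] M w // hw.
case: w hw => [|a w'] hw.
  by rewrite !G_nil /= mulr0 mul0r.
rewrite !G_rec // mulr_sumr; apply: eq_big_nat => i /andP[hi1 hi2].
rewrite (G_eq _ (M' := fun v => i%:R * M (i :: v) + M (i :: v) * (sumn v)%:R)); last first.
  by move=> v /=; rewrite natrD mulrDr mulrC.
rewrite G_lin IH; last by rewrite size_drop; move: hw hi2 => /=; lia.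
rewrite -mulrDl -natrD size_drop mulrCA; congr (_ * (_ * _)); congr (_%:R).
move: hi2 => /=; lia.
Qed.

Definition nx (v : seq Omega) : bool := if v is lx :: _ then false else true.
Definition Y (v : seq Omega) : rat :=
  if all (pred1 ly) v then ((size v)`!%:R)^-1 else 0.

Lemma powm_I (a : Omega) (I : mould Omega) :
  (forall s, I s = (s == [:: a])%:R) -> forall k v, powm I k v = (v == nseq k a)%:R.
Proof.
move=> hI; elim=> [|k IH] v; first by case: v.
rewrite /powm /= -/(powm I k) /mulm.
case: v => [|b v].
  by rewrite big_ord1 /= hI /= mul0r.
rewrite (bigD1 (@Ordinal (size (b :: v)).+1 1 isT)) //= big1 ?addr0.
  rewrite hI IH /= take0 drop0 !eqseq_cons andbT.
  by case: (b == a); case: (v == nseq k a); rewrite ?mul1r ?mul0r.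
move=> i ne; rewrite hI; case: eqP => [e|_]; last by rewrite mul0r.
have := congr1 size e; rewrite size_takel; last by rewrite -ltnS.
move=> i1; move: ne; rewrite -val_eqE /= i1 //.
Qed.

Lemma expm_I (a : Omega) (I : mould Omega) :
  (forall s, I s = (s == [:: a])%:R) -> forall v,
  expm I v = if all (pred1 a) v then ((size v)`!%:R)^-1 else 0.
Proof.
move=> hI v; rewrite /expm (bigD1 ord_max) //= big1 ?addr0.
  rewrite (powm_I hI); case: (all_pred1P a v) => [e|ne].
    by rewrite -e eqxx mul1r.
  by rewrite (introF eqP ne) mul0r.
move=> i ne; rewrite (powm_I hI); case: eqP => [e|_]; last by rewrite mul0r.
have := congr1 size e; rewrite size_nseq => h.
by move: ne; rewrite -val_eqE /= => /eqP []; exact: esym.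
Qed.

Lemma I_xE s : I_x s = (s == [:: lx])%:R.
Proof. by case: s => [|[] [|b s]]. Qed.
Lemma I_yE s : I_y s = (s == [:: ly])%:R.
Proof. by case: s => [|[] [|b s]]. Qed.

Lemma take_nseq_cat (a : Omega) i p r : (i <= p)%N -> take i (nseq p a ++ r) = nseq i a.
Proof.
move=> h; rewrite take_cat size_nseq; case: ltnP => h2.
  by rewrite take_nseq // ltnW.
have -> : i = p by lia.
by rewrite subnn take0 cats0.
Qed.

Lemma drop_nseq_cat (a : Omega) i p r : (i <= p)%N -> drop i (nseq p a ++ r) = nseq (p - i) a ++ r.
Proof.
move=> h; rewrite drop_cat size_nseq; case: ltnP => h2.
  by rewrite drop_nseq.
have -> : i = p by lia.
by rewrite subnn drop0.
Qed.

Lemma S_closed k v : nx v -> S_Om (nseq k lx ++ v) = Y v / (k`!)%:R.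
Proof.
move=> hv; rewrite /S_Om /mulm size_cat size_nseq.
have hk : (k < (k + size v).+1)%N by lia.
rewrite (bigD1 (Ordinal hk)) //= big1 ?addr0.
  rewrite take_size_cat ?size_nseq // drop_size_cat ?size_nseq //.
  rewrite (expm_I I_xE) (expm_I I_yE) all_pred1_nseq ?eqxx ?orbT size_nseq /Y.
  by rewrite mulrC.
move=> i ne; case: (ltngtP i k) => [lt|gt|eq].
- rewrite drop_nseq_cat; last by lia.
  have -> : (k - i = (k - i).-1.+1)%N by lia.
  by rewrite (expm_I I_yE) /= mulr0.
- clear ne; have hi := ltn_ord i; move: (nat_of_ord i) gt hi => j gt hi; clear i.
  rewrite take_cat size_nseq ltnNge (ltnW gt) /=.
  case: v hv hk hi => [|[] v] //= hv hk hi.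
    by rewrite addn0 in hi; lia.
  have -> : (j - k = (j - k).-1.+1)%N by lia.
  by rewrite (expm_I I_xE) /= all_cat /= andbF mul0r.
- by move: ne; rewrite -val_eqE /= eq eqxx.
Qed.

Lemma S_Om_nil : S_Om [::] = 1.
Proof. by have := S_closed 0 (v := [::]) isT; rewrite /= /Y /= invr1 mulr1. Qed.

Lemma U_gen w : w != [:: lx] -> U w =
  if (count is_y w == 1)%N then
    (-1) ^+ (size w - find is_y w - 1) /
      (((find is_y w)`!)%:R * ((size w - find is_y w - 1)`!)%:R)
  else 0.
Proof. by case: w => [|[] [|b w]]. Qed.

Lemma U_xs i : U (nseq i lx) = (i == 1)%:R.
Proof.
case: i => [|[|i]] //.
by rewrite U_gen // count_nseq /=.
Qed.

Lemma U_ys p v : U (nseq p lx ++ ly :: v) =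
  if (count is_y v == 0)%N then (-1) ^+ (size v) / ((p`!)%:R * ((size v)`!)%:R) else 0.
Proof.
rewrite U_gen; last by case: p => [|[|p]].
rewrite count_cat count_nseq /= mul0n add0n add1n eqSS.
rewrite find_cat has_nseq /= andbF size_nseq addn0 size_cat size_nseq /=.
have -> : (p + (size v).+1 - p - 1 = size v)%N by lia.
by [].
Qed.

Lemma decomp w : exists k v, w = nseq k lx ++ v /\ nx v.
Proof.
elim: w => [|a w [k [v [-> hv]]]]; first by exists 0%N, [::].
case: a; first by exists k.+1, v.
by exists 0%N, (ly :: nseq k lx ++ v).
Qed.

Lemma fact_neq0 n : (n`!)%:R != 0 :> rat.
Proof. by rewrite pnatr_eq0 -lt0n fact_gt0. Qed.

Lemma alt_sum m : \sum_(j < m.+1) (-1) ^+ j / ((j`!)%:R * ((m - j)`!)%:R) = (m == 0%N)%:R :> rat.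
Proof.
apply: (mulfI (fact_neq0 m)).
have -> : m`!%:R * (m == 0%N)%:R = (m == 0%N)%:R :> rat.
  by case: m => [|m]; rewrite ?mulr0 ?mul1r.
have -> : (m == 0%N)%:R = (1 + (-1)) ^+ m :> rat by rewrite subrr expr0n.
rewrite exprDn mulr_sumr.
apply: eq_bigr => j _; rewrite expr1n mul1r.
have hj : (j <= m)%N by rewrite -ltnS.
rewrite -mulr_natr -(bin_fact hj) !natrM.
have h1 := fact_neq0 j; have h2 := fact_neq0 (m - j).
rewrite mul1r -[RHS]mulr_natr.
by rewrite mulrACA mulfV ?mulf_neq0 // mulr1 mulrC.
Qed.

Lemma partA p r : nx r ->
  \sum_(1 <= i < p.+1) U (take i (nseq p lx ++ r)) * S_Om (drop i (nseq p lx ++ r))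
  = p%:R * Y r / (p`!)%:R.
Proof.
move=> hr; case: p => [|p].
  by rewrite big_geq // !mul0r.
rewrite big_ltn // (@take_nseq_cat lx 1 p.+1 r) // (@drop_nseq_cat lx 1 p.+1 r) // U_xs /= mul1r.
rewrite big1_seq ?addr0; last first.
  move=> i; rewrite mem_index_iota => /andP[h1 h2].
  rewrite (@take_nseq_cat lx i p.+1 r) ?U_xs; last lia.
  have -> : (i == 1%N) = false by apply/eqP; lia.
  by rewrite mul0r.
rewrite subn1 /= S_closed // factS natrM invfM mulrACA mulfV ?mul1r //.
by rewrite pnatr_eq0.
Qed.

Lemma take_shift j p v :
  take (j + p.+1) (nseq p lx ++ ly :: v) = nseq p lx ++ ly :: take j v.
Proof.
rewrite take_cat size_nseq ltnNge (_ : (p <= j + p.+1)%N); last by lia.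
by have -> : (j + p.+1 - p = j.+1)%N by lia.
Qed.

Lemma drop_shift j p v :
  drop (j + p.+1) (nseq p lx ++ ly :: v) = drop j v.
Proof.
rewrite drop_cat size_nseq ltnNge (_ : (p <= j + p.+1)%N); last by lia.
by have -> : (j + p.+1 - p = j.+1)%N by lia.
Qed.

Lemma partB p m r : nx r ->
  \sum_(p.+1 <= i < (p + (m + size r).+1).+1)
     U (take i (nseq p lx ++ ly :: (nseq m lx ++ r))) *
     S_Om (drop i (nseq p lx ++ ly :: (nseq m lx ++ r)))
  = (m == 0%N)%:R * Y r / (p`!)%:R.
Proof.
move=> hr; rewrite (big_addn 0 _ p.+1).
have -> : ((p + (m + size r).+1).+1 - p.+1 = (m + size r).+1)%N by lia.
transitivity (\sum_(0 <= j < m.+1)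
    U (take (j + p.+1) (nseq p lx ++ ly :: (nseq m lx ++ r))) *
    S_Om (drop (j + p.+1) (nseq p lx ++ ly :: (nseq m lx ++ r))) +
  \sum_(m.+1 <= j < (m + size r).+1)
    U (take (j + p.+1) (nseq p lx ++ ly :: (nseq m lx ++ r))) *
    S_Om (drop (j + p.+1) (nseq p lx ++ ly :: (nseq m lx ++ r)))).
  by rewrite -big_cat_nat //; lia.
rewrite [X in _ + X]big1_seq ?addr0; last first.
  move=> j; rewrite mem_index_iota => /andP[_ /andP[h1 h2]].
  rewrite take_shift U_ys take_cat size_nseq ltnNge (ltnW h1) /=.
  case: r hr h2 => [|[] r] //= hr h2; first by rewrite addn0 in h2; lia.
  have -> : (j - m = (j - m).-1.+1)%N by lia.
  by rewrite /= count_cat count_nseq /= mul0r.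
transitivity (\sum_(0 <= j < m.+1) (Y r / (p`!)%:R) *
                 ((-1) ^+ j / ((j`!)%:R * ((m - j)`!)%:R))).
  apply: eq_big_nat => j /andP[_ hj].
  rewrite take_shift drop_shift take_nseq_cat ?drop_nseq_cat; try lia.
  rewrite U_ys count_nseq /= size_nseq S_closed // !invfM.
  by ring.
rewrite -mulr_sumr big_mkord alt_sum.
by rewrite mulrC mulrA.
Qed.

Lemma Y_cons m r : ((m + size r).+1)%:R * Y (ly :: nseq m lx ++ r) = (m == 0%N)%:R * Y r.
Proof.
case: m => [|m]; last by rewrite /Y /= mulr0 mul0r.
rewrite /Y /= mul1r; case: (all (pred1 ly) r); last by rewrite mulr0.
by rewrite factS natrM invfM mulrA mulfV ?mul1r // pnatr_eq0.
Qed.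

Lemma comb (w : seq Omega) : w != [::] ->
  (size w)%:R * S_Om w = \sum_(1 <= i < (size w).+1) U (take i w) * S_Om (drop i w).
Proof.
move=> wn; have [p [r [ew hr]]] := decomp w; subst w.
case: r hr wn => [|[] r'] // hr wn.
  by rewrite size_cat size_nseq addn0 partA // S_closed // mulrA.
have [m [r'' [-> hr'']]] := decomp r'.
rewrite size_cat size_nseq /= size_cat size_nseq.
rewrite (big_cat_nat _ (n := p.+1)) //=; last by lia.
rewrite partA // partB //.
by rewrite S_closed // natrD mulrDl !mulrA Y_cons.
Qed.

Lemma S_N_nil : S_N [::] = 1.
Proof. by rewrite /S_N big_ord0. Qed.

Lemma S_N_cons i v : (0 < i)%N -> S_N (i :: v) * (sumn (i :: v))%:R = S_N v.
Proof.
move=> hi; rewrite /S_N /= big_ord_recl /= -sumnE /=.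
rewrite mulrAC mulVf ?mul1r; last by rewrite pnatr_eq0; lia.
by apply: eq_bigr => j _.
Qed.

Lemma GS k : forall w, (size w < k)%N -> G S_N w = S_Om w.
Proof.
elim: k => [|k IH] w // hw.
case: w hw => [|a w'] hw.
  by rewrite G_nil S_N_nil S_Om_nil.
have hn : (size (a :: w'))%:R != 0 :> rat by rewrite pnatr_eq0.
apply: (mulfI hn); rewrite -(@G_nabla (size (a :: w')).+1) // comb //.
rewrite G_rec //; apply: eq_big_nat => i /andP[hi1 hi2]; congr (_ * _).
rewrite (G_eq _ (M' := S_N)); last by move=> v; rewrite S_N_cons.
apply: IH; rewrite size_drop; move: hw hi1 => /=; lia.
Qed.

Theorem theorem5p2 :
  (forall w : seq Omega, odotU S_N w = S_Om w) /\
  (forall w : seq Omega, odotU T_N w = T_Om w).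
Proof.
split => w; rewrite odotU_G.
  exact: (@GS (size w).+1).
rewrite /T_N /T_Om.
rewrite (@G_ext (size w).+1 _ (fun n => \sum_(1 <= k < (size w).+1)
   (-1) ^+ k.-1 / k%:R * powm (fun v => S_N v - onem v) k n)) //; last first.
  by move=> n hn; apply: logm_trunc; [exact: S_N_nil | lia].
rewrite G_sumk /logm; apply: eq_bigr => k _; rewrite G_scale G_powm; congr (_ * _).
by apply: powm_ext => v; rewrite G_sub G_onem (@GS (size v).+1).
Qed.
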